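(* In the setting described in the context, let $q\in\{1,\dots,n\}$. The following are equivalent: (1) there exists a $q$-maxitive capacity $\mu:2^{\mathcal C}\to L$ with $S_\mu(x^{(k)})=\alpha^{(k)}$ for all $k\in\{1,\dots,N\}$; (2) the reduced system $(S_q)$ is consistent and there exists $A\subseteq\mathcal C$ with $|A|=q$ and $e_q(A)=1$.
   Context: Let $\mathcal C=\{1,\dots,n\}$ and let $L$ be either a finite totally ordered set $0=\xi_1<\dots<\xi_l=1$ or $L=[0,1]$. A capacity is a map $\mu:2^{\mathcal C}\to L$ with $\mu(\emptyset)=0$, $\mu(\mathcal C)=1$, monotone for inclusion; it is $q$-maxitive if for all $X$ with $|X|>q$, $\mu(X)=\max_{Y\subsetneq X,\ |Y|\le q}\mu(Y)$. Sugeno integral: $S_\mu(x)=\max_{A\subseteq\mathcal C}\min(\min_{i\in A}x_i,\mu(A))$ with $\min_{i\in\emptyset}x_i=1$. Training data: $N$ pairs $(x^{(k)},\alpha^{(k)})$, $x^{(k)}\in L^n$, $\alpha^{(k)}\in L$. For nonempty $A$, $m_{k,A}=\min_{i\in A}x^{(k)}_i$. The reduced system $(S_q)$ has unknowns $\xi_A\in L$ for $A\subseteq\mathcal C$ with $0<|A|\le q$, and equations $\max_{0<|A|\le q}\min(m_{k,A},\xi_A)=\alpha^{(k)}$, $k=1,\dots,N$; it is consistent if it has a solution in $L$. For $0<|A|\le q$, $e_q(A)=\min_{1\le k\le N}(m_{k,A}\to_G\alpha^{(k)})$, where $a\to_G b=1$ if $a\le b$ and $a\to_G b=b$ otherwise.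 *)

(* Defs.v *)
From HB Require Import structures.
From mathcomp Require Import all_boot all_order all_algebra.
From mathcomp Require Import reals.
Set Implicit Arguments. Unset Strict Implicit. Unset Printing Implicit Defensive.
Import Order.TTheory GRing.Theory Num.Theory.
Local Open Scope ring_scope.

(* The scale L, viewed inside the reals: either a finite chain
   0 = xi_1 < ... < xi_l = 1 (a finite subset of [0,1] containing 0 and 1),
   or the whole unit interval [0,1]. *)
Definition is_scale (R : realType) (L : pred R) : Prop :=
  (forall x, L x = (0 <= x <= 1)) \/
  (exists s : seq R, (forall x, L x = (x \in s)) /\ 0 \in s /\ 1 \in s /\
                     all (fun x => 0 <= x <= 1) s).

(* Criteria C = {1,...,n} are represented by 'I_n. *)
Definition capacity (R : realType) (L : pred R) (n : nat)
  (mu : {set 'I_n} -> R) : Prop :=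
  (forall A, L (mu A)) /\ mu set0 = 0 /\ mu setT = 1 /\
  (forall A B : {set 'I_n}, A \subset B -> mu A <= mu B).

Definition q_maxitive (R : realType) (n q : nat) (mu : {set 'I_n} -> R) : Prop :=
  forall X : {set 'I_n}, (q < #|X|)%N ->
    mu X = \big[Num.max/0]_(Y : {set 'I_n} | (Y \proper X) && (#|Y| <= q)%N) mu Y.

(* min over i in A of x_i, with the empty minimum equal to 1 *)
Definition minA (R : realType) (n : nat) (x : 'I_n -> R) (A : {set 'I_n}) : R :=
  \big[Num.min/1]_(i in A) x i.

Definition sugeno (R : realType) (n : nat) (mu : {set 'I_n} -> R) (x : 'I_n -> R) : R :=
  \big[Num.max/0]_(A : {set 'I_n}) Num.min (minA x A) (mu A).

Definition Sq_consistent (R : realType) (L : pred R) (n N q : nat)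
  (x : 'I_N -> 'I_n -> R) (alpha : 'I_N -> R) : Prop :=
  exists xi : {set 'I_n} -> R,
    (forall A : {set 'I_n}, (0 < #|A| <= q)%N -> L (xi A)) /\
    (forall k : 'I_N,
       \big[Num.max/0]_(A : {set 'I_n} | (0 < #|A| <= q)%N) Num.min (minA (x k) A) (xi A)
       = alpha k).

Definition impG (R : realType) (a b : R) : R := if a <= b then 1 else b.

Definition e_q (R : realType) (n N : nat) (x : 'I_N -> 'I_n -> R) (alpha : 'I_N -> R)
  (A : {set 'I_n}) : R :=
  \big[Num.min/1]_(k : 'I_N) impG (minA (x k) A) (alpha k).

(* Main.v *)
From Pilot Require Import Defs.
From HB Require Import structures.
From mathcomp Require Import all_boot all_order all_algebra.
From mathcomp Require Import reals.
Import Order.TTheory GRing.Theory Num.Theory.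
Local Open Scope ring_scope.

Notation mA := Pilot.Defs.minA.
Section Helpers.
Context {R : realType}.

Lemma bigmax_attain (I : finType) (P : pred I) (F : I -> R) (x0 : R) :
  \big[Num.max/x0]_(i | P i) F i = x0 \/
  exists2 i, P i & \big[Num.max/x0]_(i | P i) F i = F i.
Proof.
apply: (big_ind (fun v => v = x0 \/ exists2 i, P i & v = F i)).
- by left.
- move=> a b Ha Hb; case: leP => _; [exact: Hb | exact: Ha].
- by move=> i Pi; right; exists i.
Qed.

Lemma minA_anti {n : nat} (x : 'I_n -> R) {A B : {set 'I_n}} :
  A \subset B -> mA x B <= mA x A.
Proof.
move=> sAB; rewrite /mA; apply: le_bigmin; first exact: bigmin_le_id.
by move=> i iA; apply: bigmin_le_cond; apply: (subsetP sAB).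
Qed.

Lemma minA_le1 {n : nat} (x : 'I_n -> R) A : mA x A <= 1.
Proof. exact: bigmin_le_id. Qed.

Lemma scale_props {L : pred R} : is_scale L ->
  [/\ L 0, L 1 & forall y, L y -> 0 <= y <= 1].
Proof.
case=> [HL | [s [HL [s0 [s1 sall]]]]].
- by split; rewrite ?HL ?lexx ?ler01 // => y; rewrite HL.
- split; rewrite ?HL //. by move=> y; rewrite HL => ys; move/allP: sall; apply.
Qed.

Lemma extend_set {n : nat} {Y : {set 'I_n}} {k} :
  (#|Y| + k <= n)%N -> exists A : {set 'I_n}, Y \subset A /\ #|A| = (#|Y| + k)%N.
Proof.
elim: k => [|k IH] h; first by exists Y; rewrite addn0.
have h' : (#|Y| + k <= n)%N by apply: leq_trans h; rewrite leq_add2l.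
have [A [sYA cA]] := IH h'.
have: (0 < #|~: A|)%N.
  have := cardsC A; rewrite card_ord cA => e.
  rewrite -(ltn_add2l (#|Y| + k)) addn0 e. by rewrite -addn1 -addnA addn1.
case/card_gt0P => i; rewrite in_setC => iA.
exists (i |: A); split; first by apply: (subset_trans sYA); apply: subsetUr.
by rewrite cardsU1 iA cA addnS.
Qed.

End Helpers.

Theorem theorem2 (R : realType) (L : pred R) (n N q : nat)
  (x : 'I_N -> 'I_n -> R) (alpha : 'I_N -> R) :
  is_scale L ->
  (forall k i, L (x k i)) -> (forall k, L (alpha k)) ->
  (1 <= q <= n)%N ->
  (exists mu : {set 'I_n} -> R,
      capacity L mu /\ q_maxitive q mu /\ (forall k, sugeno mu (x k) = alpha k))
  <->
  (Sq_consistent L q x alpha /\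
   exists A : {set 'I_n}, #|A| = q /\ e_q x alpha A = 1).
Proof.
move=> hS hx ha /andP[q1 qn].
have [L0 L1 Lsub] := scale_props (L:=L) hS.
split.
- case=> mu [[muL [mu0 [mu1 mumono]]] [qmax sug]].
  have key : forall A : {set 'I_n}, (q < #|A|)%N ->
      exists Y : {set 'I_n}, [/\ Y \subset A, (#|Y| <= q)%N & mu A = mu Y].
    move=> A hA; have := qmax A hA.
    case: (@bigmax_attain R _ (fun Y : {set 'I_n} => (Y \proper A) && (#|Y| <= q)%N) mu 0)
      => [-> e | [Y /andP[pY cY] ->] e].
      by exists set0; rewrite sub0set cards0 e mu0.
    by exists Y; rewrite (proper_sub pY) cY e.
  split.
  + exists mu; split; first by move=> A _; apply: muL.
    move=> k; rewrite -sug /sugeno; apply: le_anti; apply/andP; split.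
    * apply: bigmax_le; first exact: bigmax_ge_id.
      by move=> A _; apply: (le_bigmax 0 (fun A => Num.min (mA (x k) A) (mu A))).
    * apply: bigmax_le; first exact: bigmax_ge_id.
      have h0 : forall A : {set 'I_n}, mu A = 0 ->
          Num.min (mA (x k) A) (mu A) <=
          \big[Num.max/0]_(A : {set 'I_n} | (0 < #|A| <= q)%N) Num.min (mA (x k) A) (mu A).
        move=> A ->; apply: le_trans (bigmax_ge_id _ _ _ _); by rewrite ge_min lexx orbT.
      move=> A _; case: (leqP #|A| q) => hAq.
        case: (posnP #|A|) => hA0.
          by apply: h0; rewrite (cards0_eq hA0).
        by apply: (le_bigmax_cond 0 (fun A => Num.min (mA (x k) A) (mu A))); rewrite hA0 hAq.
      have [Y [sYA cY eY]] := key A hAq.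
      case: (posnP #|Y|) => hY0.
        by apply: h0; rewrite eY (cards0_eq hY0).
      have hYc : (0 < #|Y| <= q)%N by rewrite hY0 cY.
      apply: le_trans (le_bigmax_cond 0 (P:=fun A : {set 'I_n} => (0 < #|A| <= q)%N) (fun A => Num.min (mA (x k) A) (mu A)) hYc).
      by rewrite eY; apply: le_min2 => //; apply: minA_anti.
  + have [Y [cY mY]] : exists Y : {set 'I_n}, (0 < #|Y| <= q)%N /\ mu Y = 1.
      case: (ltnP q n) => hqn.
        have hT : (q < #|[set: 'I_n]|)%N by rewrite cardsT card_ord.
        have [Y [_ cY eY]] := key setT hT.
        exists Y; split; last by rewrite -eY.
        rewrite cY andbT lt0n; apply/negP => /eqP/cards0_eq eY0.
        by move: eY; rewrite mu1 eY0 mu0 => /eqP; rewrite oner_eq0.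
      exists setT; rewrite cardsT card_ord mu1; split => //.
      by rewrite (leq_trans q1 qn) hqn.
    case/andP: cY => _ cY.
    have hle : (#|Y| + (q - #|Y|) <= n)%N by rewrite subnKC.
    have [A [sYA cA]] := extend_set hle.
    exists A; split; first by rewrite cA subnKC.
    apply: le_anti; rewrite bigmin_le_id /=.
    apply: le_bigmin => // k _; rewrite /impG ifT //.
    apply: le_trans (minA_anti (x k) sYA) _.
    rewrite -sug /sugeno.
    apply: le_trans (le_bigmax 0 (fun A => Num.min (mA (x k) A) (mu A)) Y).
    by rewrite mY min_l // minA_le1.
- case=> [[xi [xiL xieq]] [A0 [hA0 he]]].
  have hm : forall k, mA (x k) A0 <= alpha k.
    move=> k; have : 1 <= impG (mA (x k) A0) (alpha k).
      by rewrite -he; apply: bigmin_le.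
    rewrite /impG; case: ifP => // hn h1.
    by rewrite (le_trans (minA_le1 (x k) A0) h1) in hn.
  pose xi2 := fun B : {set 'I_n} => if B == A0 then 1 else xi B.
  pose mu := fun A : {set 'I_n} => \big[Num.max/0]_(B : {set 'I_n} | (0 < #|B| <= q)%N && (B \subset A)) xi2 B.
  have xi2L : forall B : {set 'I_n}, (0 < #|B| <= q)%N -> L (xi2 B).
    by move=> B hB; rewrite /xi2; case: eqP => _ //; apply: xiL.
  have xi2ge : forall B : {set 'I_n}, (0 < #|B| <= q)%N -> xi B <= xi2 B.
    move=> B hB; rewrite /xi2; case: eqP => _ //.
    by case/andP: (Lsub _ (xiL B hB)).
  have mule : forall A B : {set 'I_n}, (0 < #|B| <= q)%N -> B \subset A -> xi2 B <= mu A.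
    by move=> A B hB sBA; apply: (le_bigmax_cond 0 xi2); rewrite hB sBA.
  have mumono : forall A B : {set 'I_n}, A \subset B -> mu A <= mu B.
    move=> A B sAB; apply: bigmax_le; first exact: bigmax_ge_id.
    move=> C /andP[hC sCA]; apply: mule => //; exact: subset_trans sCA sAB.
  have A0c : (0 < #|A0| <= q)%N by rewrite hA0 q1 leqnn.
  exists mu; split; [split; [|split; [|split]] | split].
  + move=> A; rewrite /mu.
    case: (@bigmax_attain R _ (fun B : {set 'I_n} => (0 < #|B| <= q)%N && (B \subset A)) xi2 0)
      => [-> // | [B /andP[hB _] ->]].
    exact: xi2L.
  + rewrite /mu; apply: big_pred0 => B; rewrite subset0.
    by case: (B =P set0) => [->|_]; rewrite ?cards0 ?andbF.
  + apply: le_anti; apply/andP; split.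
      apply: bigmax_le; first exact: ler01.
      by move=> B /andP[hB _]; case/andP: (Lsub _ (xi2L B hB)).
    have := mule setT A0 A0c (subsetT _); by rewrite /xi2 eqxx.
  + exact: mumono.
  + move=> X hX; apply: le_anti; apply/andP; split.
      apply: bigmax_le; first exact: bigmax_ge_id.
      move=> B /andP[hB sBX].
      apply: le_trans (mule B B hB (subxx _)) _.
      apply: (le_bigmax_cond 0 mu); rewrite properEcard sBX /=.
      case/andP: hB => _ hB; rewrite hB andbT.
      exact: leq_ltn_trans hB hX.
    apply: bigmax_le; first exact: bigmax_ge_id.
    by move=> Y /andP[pY _]; apply: mumono; apply: proper_sub.
  + move=> k; rewrite /sugeno; apply: le_anti; apply/andP; split.
      apply: bigmax_le; first by case/andP: (Lsub _ (ha k)).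
      move=> A _.
      case: (@bigmax_attain R _ (fun B : {set 'I_n} => (0 < #|B| <= q)%N && (B \subset A)) xi2 0)
        => [e | [B /andP[hB sBA] e]]; rewrite /mu ?e.
        by rewrite ge_min; case/andP: (Lsub _ (ha k)) => -> _; rewrite orbT.
      rewrite /xi2; case: eqP => [eB | nB].
        rewrite ge_min; apply/orP; left.
        by apply: le_trans (hm k); rewrite -eB; apply: minA_anti.
      apply: le_trans (le_min2 (minA_anti (x k) sBA) (lexx _)) _.
      rewrite -(xieq k).
      exact: (le_bigmax_cond 0 (fun A => Num.min (mA (x k) A) (xi A))).
    rewrite -{1}(xieq k); apply: bigmax_le; first exact: bigmax_ge_id.
    move=> B hB.
    apply: le_trans (le_bigmax 0 (fun A => Num.min (mA (x k) A) (mu A)) B).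
    apply: le_min2 => //; apply: le_trans (xi2ge B hB) _.
    exact: mule.
Qed.
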